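(* Let $n\ge2$, $m\ge1$, and let $G$ be given by the presentation $$G=\Big\langle a_1,\dots,a_n,c_1,\dots,c_m \ \Big|\ [a_i,a_j]=\prod_{t=1}^m c_t^{\lambda_t^{ij}}\ (1\le i<j\le n),\ [a_i,c_j]=[c_k,c_r]=1 \text{ for all } i,j,k,r\Big\rangle$$ for some integers $\lambda_t^{ij}$; write $A=\{a_1,\dots,a_n\}$, $C=\{c_1,\dots,c_m\}$. Then: (1) $G$ is finitely generated, torsion-free and $2$-step nilpotent, and $(A;C)$ is a Malcev basis of $G$; (2) $Z(G)$ has a basis of the form $C\cup D$ for some set $D$; (3) $\mathrm{rank}(G/Z(G))=n-|D|$; (4) $\mathrm{rank}(G/Z(G))+\mathrm{rank}(Z(G))=n+m$; (5) $\mathrm{rank}(G')\le m\le\mathrm{rank}(Z(G))$.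
   Context: Commutators: $[g,h]=g^{-1}h^{-1}gh$. A group is $2$-step nilpotent if all commutators are central. A Malcev basis of such a group is a pair $(A;C)$ with $C$ a basis of a free abelian subgroup with $G'\le\langle C\rangle\le Z(G)$ and $A$ such that $G/\langle C\rangle$ is free abelian with basis $\{a\langle C\rangle\mid a\in A\}$. The rank of a finitely generated abelian group is the minimum cardinality of a generating set. *)

(* Defs.v *)
(* Groups are MathComp's (possibly infinite) [groupType]
   from boot/monoid.v; commutator [~ x, y] = x^-1 * y^-1 * x * y. *)
From HB Require Import structures.
From mathcomp Require Import all_boot all_order all_algebra.
Set Implicit Arguments. Unset Strict Implicit. Unset Printing Implicit Defensive.

Local Open Scope group_scope.

Section GroupDefs.
Variable G : groupType.

Definition zexpg (x : G) (k : int) : G :=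
  match k with Posz p => x ^+ p | Negz p => (x ^+ p.+1)^-1 end.

Definition gen (S : G -> Prop) (x : G) : Prop :=
  forall P : G -> Prop, P 1 -> (forall u v, P u -> P v -> P (u * v^-1)) ->
    (forall u, S u -> P u) -> P x.

Definition center (z : G) : Prop := forall g : G, g * z = z * g.

Definition derived (x : G) : Prop := gen (fun y => exists g h, y = [~ g, h]) x.

Definition fin_gen : Prop := exists s : seq G, forall x, gen (fun y => y \in s) x.

Definition torsion_free : Prop :=
  forall (x : G) (k : nat), (0 < k)%N -> x ^+ k = 1 -> x = 1.

Definition two_step_nilpotent : Prop := forall g h : G, center [~ g, h].

Definition range {k : nat} (f : 'I_k -> G) (y : G) : Prop := exists i, y = f i.

Definition malcev_basis {n m : nat} (a : 'I_n -> G) (c : 'I_m -> G) : Prop :=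
  (forall s t, c s * c t = c t * c s) /\
  (forall u : 'I_m -> int, \prod_(t < m) zexpg (c t) (u t) = 1 -> forall t, u t = 0) /\
  (forall x, derived x -> gen (range c) x) /\
  (forall x, gen (range c) x -> center x) /\
  (* G/<C> free abelian with basis {a_i <C>} *)
  (forall g h : G, gen (range c) [~ g, h]) /\
  (forall g : G, exists u : 'I_n -> int,
      gen (range c) ((\prod_(i < n) zexpg (a i) (u i))^-1 * g)) /\
  (forall u : 'I_n -> int, gen (range c) (\prod_(i < n) zexpg (a i) (u i)) ->
      forall i, u i = 0).

Definition center_basis {m k : nat} (c : 'I_m -> G) (d : 'I_k -> G) : Prop :=
  (forall t, center (c t)) /\ (forall i, center (d i)) /\
  (forall x, center x <-> gen (fun y => range c y \/ range d y) x) /\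
  (forall (u : 'I_m -> int) (v : 'I_k -> int),
     \prod_(t < m) zexpg (c t) (u t) * \prod_(i < k) zexpg (d i) (v i) = 1 ->
     (forall t, u t = 0) /\ (forall i, v i = 0)).

Definition is_rank_sub (S : G -> Prop) (r : nat) : Prop :=
  (exists g : 'I_r -> G, (forall i, S (g i)) /\ (forall x, S x <-> gen (range g) x)) /\
  (forall (r' : nat) (g : 'I_r' -> G), (forall i, S (g i)) ->
      (forall x, S x <-> gen (range g) x) -> (r <= r')%N).

(* rank of G/Z(G): a family of cosets g_i Z(G) generates G/Z(G) iff
   the g_i together with Z(G) generate G *)
Definition is_rank_quot_center (r : nat) : Prop :=
  (exists g : 'I_r -> G, forall x, gen (fun y => center y \/ range g y) x) /\
  (forall (r' : nat) (g : 'I_r' -> G),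
      (forall x, gen (fun y => center y \/ range g y) x) -> (r <= r')%N).

End GroupDefs.

Definition pres_rels (H : groupType) {n m : nat}
    (lam : 'I_n -> 'I_n -> 'I_m -> int) (a : 'I_n -> H) (c : 'I_m -> H) : Prop :=
  (forall i j : 'I_n, (i < j)%N ->
      [~ a i, a j] = \prod_(t < m) zexpg (c t) (lam i j t)) /\
  (forall (i : 'I_n) (j : 'I_m), [~ a i, c j] = 1) /\
  (forall k r : 'I_m, [~ c k, c r] = 1).

Definition presented_by (G : groupType) {n m : nat}
    (lam : 'I_n -> 'I_n -> 'I_m -> int) (a : 'I_n -> G) (c : 'I_m -> G) : Prop :=
  pres_rels lam a c /\
  (forall x : G, gen (fun y => range a y \/ range c y) x) /\
  (forall (H : groupType) (a' : 'I_n -> H) (c' : 'I_m -> H), pres_rels lam a' c' ->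
     exists f : G -> H, (forall x y, f (x * y) = f x * f y) /\
       (forall i, f (a i) = a' i) /\ (forall j, f (c j) = c' j)).

(* Main.v *)
Require Import Defs.
From HB Require Import structures.
From mathcomp Require Import all_boot all_order all_algebra.
From mathcomp Require Import zify ring lra.
From Stdlib Require Import Classical.
Set Implicit Arguments. Unset Strict Implicit. Unset Printing Implicit Defensive.
Import Order.TTheory GRing.Theory Num.Theory.

Section GroupLemmas.
Variable G : groupType.
Local Open Scope group_scope.
Implicit Types x y z : G.

Lemma zexpg_sub x (p q : nat) : zexpg x (p%:Z - q%:Z)%R = x ^+ p * (x ^+ q)^-1.
Proof.
case: (leqP q p) => hqp.
  have -> : (p%:Z - q%:Z)%R = Posz (p - q) by rewrite subzn.
  by rewrite /= expgnFr.
have -> : (p%:Z - q%:Z)%R = Negz (q - p).-1.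
  by rewrite NegzE; rewrite prednK ?subn_gt0 // -opprB subzn // ltnW.
rewrite /= prednK ?subn_gt0 //.
have -> : x ^+ q = x ^+ (q - p) * x ^+ p by rewrite -expgnDr subnK // ltnW.
by rewrite invgM mulgA mulgV mul1g.
Qed.

Lemma zexpg_rep (k : int) : exists p q : nat, k = (p%:Z - q%:Z)%R.
Proof.
case: k => p; first by exists p, 0%N; rewrite subr0.
by exists 0%N, p.+1; rewrite NegzE sub0r.
Qed.

Lemma commute_expg x y p q : commute x y -> commute (x ^+ p) (y ^+ q).
Proof. by move=> h; apply: commuteX2. Qed.

Lemma zexpgD x (k l : int) : zexpg x (k + l)%R = zexpg x k * zexpg x l.
Proof.
have [p1 [q1 ->]] := zexpg_rep k; have [p2 [q2 ->]] := zexpg_rep l.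
have -> : ((p1%:Z - q1%:Z) + (p2%:Z - q2%:Z))%R = ((p1 + p2)%N%:Z - (q1 + q2)%N%:Z)%R.
  by rewrite !PoszD; ring.
rewrite !zexpg_sub !expgnDr.
have c1 : commute (x ^+ p2) (x ^+ q1)^-1 by apply/commuteV/commute_expg/commute_refl.
rewrite invgM.
have c2 : commute (x ^+ q2)^-1 (x ^+ q1)^-1.
  by apply/commute_sym/commuteV/commute_sym/commuteV/commute_expg/commute_refl.
by rewrite -!mulgA; congr (_ * _); rewrite c2 !mulgA c1.
Qed.

Lemma zexpg0 x : zexpg x 0 = 1. Proof. by []. Qed.
Lemma zexpg1 x : zexpg x 1 = x. Proof. by rewrite /= expg1. Qed.
Lemma zexpgN x (k : int) : zexpg x (- k)%R = (zexpg x k)^-1.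
Proof.
by have [p [q ->]] := zexpg_rep k; rewrite opprB !zexpg_sub invgM invgK.
Qed.
Lemma zexpgN1 x : zexpg x (-1) = x^-1.
Proof. by rewrite zexpgN zexpg1. Qed.
Lemma zexpg1n (k : int) : zexpg (1 : G) k = 1.
Proof. by case: k => p /=; rewrite expg1n ?invg1. Qed.

Lemma commute_zexpg x y (k l : int) : commute x y -> commute (zexpg x k) (zexpg y l).
Proof.
move=> h; have [p1 [q1 ->]] := zexpg_rep k; have [p2 [q2 ->]] := zexpg_rep l.
rewrite !zexpg_sub.
have h1 : forall a b, commute x y -> commute (x ^+ a) (y ^+ b) by move=> a b; apply: commute_expg.
apply: commuteM; apply/commute_sym; apply: commuteM.
- by apply/commute_sym/h1.
- by apply/commuteV/commute_sym/h1.
- by apply/commute_sym/commuteV/h1.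
- by apply/commuteV/commute_sym/commuteV/h1.
Qed.

Lemma gen_sub (S : G -> Prop) x : S x -> gen S x.
Proof. by move=> Sx P _ _ PS; apply: PS. Qed.
Lemma gen1 (S : G -> Prop) : gen S 1.
Proof. by move=> P. Qed.
Lemma genV (S : G -> Prop) x : gen S x -> gen S x^-1.
Proof.
move=> gx P P1 PM PS; rewrite -[x^-1]mul1g; apply: (PM); [exact: P1 | exact: (gx P P1 PM PS)].
Qed.
Lemma genM (S : G -> Prop) x y : gen S x -> gen S y -> gen S (x * y).
Proof.
move=> gx gy P P1 PM PS; rewrite -[y]invgK; apply: (PM); first exact: (gx P P1 PM PS).
by apply: (genV gy).
Qed.
Lemma genMV (S : G -> Prop) x y : gen S x -> gen S y -> gen S (x * y^-1).
Proof. by move=> gx gy; apply: genM gx (genV gy). Qed.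
Lemma gen_zexpg (S : G -> Prop) x k : gen S x -> gen S (zexpg x k).
Proof.
move=> gx; have gp : forall p, gen S (x ^+ p).
  by elim=> [|p IH]; [exact: gen1 | rewrite expgS; apply: genM].
by case: k => p /=; [|apply: genV].
Qed.
Lemma gen_prod (S : G -> Prop) (I : finType) (F : I -> G) :
  (forall i, gen S (F i)) -> gen S (\prod_i F i).
Proof.
move=> h; apply: (big_ind (gen S)); [exact: gen1 | move=> ???; exact: genM | by []].
Qed.
Lemma gen_mono (S T : G -> Prop) x : (forall y, S y -> T y) -> gen S x -> gen T x.
Proof.
move=> ST gx P P1 PM PT; apply: gx => // y Sy; apply: PT; exact: ST.
Qed.
Lemma gen_gen (S T : G -> Prop) x : (forall y, S y -> gen T y) -> gen S x -> gen T x.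
Proof.
move=> ST gx; apply: gx; [exact: gen1 | move=> u v; exact: genMV | exact: ST].
Qed.
Lemma gen_ind (S P : G -> Prop) : P 1 -> (forall u v, P u -> P v -> P (u * v^-1)) ->
  (forall u, S u -> P u) -> forall x, gen S x -> P x.
Proof. by move=> P1 PM PS x gx; apply: gx. Qed.

Lemma center1 : center (1 : G).
Proof. by move=> g; rewrite mulg1 mul1g. Qed.
Lemma centerM x y : center x -> center y -> center (x * y).
Proof. by move=> cx cy g; rewrite mulgA cx -!mulgA cy. Qed.
Lemma centerV x : center x -> center x^-1.
Proof.
by move=> cx g; apply: commuteV; exact: cx.
Qed.
Lemma center_gen (S : G -> Prop) x : (forall y, S y -> center y) -> gen S x -> center x.
Proof.
move=> h; apply: gen_ind => //; first exact: center1.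
by move=> u v cu cv; apply: centerM => //; apply: centerV.
Qed.
Lemma center_zexpg x k : center x -> center (zexpg x k).
Proof.
move=> cx; apply: (@center_gen (fun y => y = x)); first by move=> y ->.
by apply: gen_zexpg; apply: gen_sub.
Qed.

Lemma zexpg_inv x (k : int) : zexpg x^-1 k = (zexpg x k)^-1.
Proof. by case: k => p /=; rewrite expVgn. Qed.

Lemma zexpgM x y (k : int) : commute x y -> zexpg (x * y) k = zexpg x k * zexpg y k.
Proof.
move=> cxy; case: k => p /=; first by rewrite expgMn.
rewrite expgMn // invgM.
by apply/commuteV/commute_sym/commuteV/commute_expg/commute_sym.
Qed.

End GroupLemmas.
Section Bil.
Variables (n m : nat) (Lam : 'I_n -> 'I_n -> 'rV[rat]_m).
Local Open Scope ring_scope.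
Definition Bf (x y : 'rV[rat]_n) : 'rV[rat]_m :=
  \sum_i \sum_j (x 0 i * y 0 j) *: Lam i j.
Lemma BDl x y w : Bf (x + y) w = Bf x w + Bf y w.
Proof.
rewrite /Bf -big_split; apply: eq_bigr => i _ /=; rewrite -big_split.
by apply: eq_bigr => j _; rewrite !mxE mulrDl scalerDl.
Qed.
Lemma BDr x y w : Bf w (x + y) = Bf w x + Bf w y.
Proof.
rewrite /Bf -big_split; apply: eq_bigr => i _ /=; rewrite -big_split.
by apply: eq_bigr => j _; rewrite !mxE mulrDr scalerDl.
Qed.
Lemma BNl x y : Bf (- x) y = - Bf x y.
Proof.
rewrite /Bf -sumrN; apply: eq_bigr => i _ /=; rewrite -sumrN.
by apply: eq_bigr => j _; rewrite !mxE mulNr scaleNr.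
Qed.
Lemma BNr x y : Bf x (- y) = - Bf x y.
Proof.
rewrite /Bf -sumrN; apply: eq_bigr => i _ /=; rewrite -sumrN.
by apply: eq_bigr => j _; rewrite !mxE mulrN scaleNr.
Qed.
Lemma B0l y : Bf 0 y = 0.
Proof. by rewrite /Bf big1 // => i _; rewrite big1 // => j _; rewrite mxE mul0r scale0r. Qed.
Lemma B0r y : Bf y 0 = 0.
Proof. by rewrite /Bf big1 // => i _; rewrite big1 // => j _; rewrite mxE mulr0 scale0r. Qed.
End Bil.

Definition Hty (n m : nat) (Lam : 'I_n -> 'I_n -> 'rV[rat]_m) :=
  ('rV[rat]_n * 'rV[rat]_m)%type.
HB.instance Definition _ n m Lam :=
  Choice.copy (@Hty n m Lam) ('rV[rat]_n * 'rV[rat]_m)%type.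

Section HDefs.
Variables (n m : nat) (Lam : 'I_n -> 'I_n -> 'rV[rat]_m).
Local Open Scope ring_scope.
Definition Hmul (g h : Hty Lam) : Hty Lam :=
  (g.1 + h.1, g.2 + h.2 + Bf Lam g.1 h.1).
Definition Hone : Hty Lam := (0, 0).
Definition Hinv (g : Hty Lam) : Hty Lam := (- g.1, - g.2 + Bf Lam g.1 g.1).
Lemma HmulA : associative Hmul.
Proof.
move=> [x z] [y w] [u v]; rewrite /Hmul /=; congr pair; first by rewrite addrA.
rewrite BDl BDr; apply/rowP => t; rewrite !mxE; ring.
Qed.
Lemma Hmul1 : left_id Hone Hmul.
Proof. by move=> [x z]; rewrite /Hmul /= B0l !add0r addr0. Qed.
Lemma Hmulg1 : right_id Hone Hmul.
Proof. by move=> [x z]; rewrite /Hmul /= B0r !addr0. Qed.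
Lemma HmulV : left_inverse Hone Hinv Hmul.
Proof.
move=> [x z]; rewrite /Hmul /Hinv /Hone /=; congr pair; first by rewrite addNr.
rewrite BNl; apply/rowP => t; rewrite !mxE; ring.
Qed.
Lemma HmulgV : right_inverse Hone Hinv Hmul.
Proof.
move=> [x z]; rewrite /Hmul /Hinv /Hone /=; congr pair; first by rewrite addrN.
rewrite BNr; apply/rowP => t; rewrite !mxE; ring.
Qed.
End HDefs.

HB.instance Definition _ n m Lam :=
  isGroup.Build (@Hty n m Lam) (@HmulA n m Lam) (@Hmul1 n m Lam) (@Hmulg1 n m Lam)
    (@HmulV n m Lam) (@HmulgV n m Lam).


Section HLemmas.
Variables (n m : nat) (Lam : 'I_n -> 'I_n -> 'rV[rat]_m).
Local Notation H := (@Hty n m Lam).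
Local Open Scope group_scope.

Lemma HmulE (g h : H) : g * h = ((g.1 + h.1)%R, (g.2 + h.2 + Bf Lam g.1 h.1)%R).
Proof. by []. Qed.
Lemma HinvE (g : H) : g^-1 = ((- g.1)%R, (- g.2 + Bf Lam g.1 g.1)%R).
Proof. by []. Qed.
Lemma HoneE : (1 : H) = (0%R, 0%R).
Proof. by []. Qed.

Lemma HcommE (g h : H) :
  [~ g, h] = (0%R, (Bf Lam g.1 h.1 - Bf Lam h.1 g.1)%R).
Proof.
case: g h => [x z] [y w].
rewrite /commg /conjg !HmulE !HinvE /=; congr pair.
  apply/rowP => i; rewrite !mxE; ring.
rewrite !(BDl, BDr, BNl, BNr); apply/rowP => t; rewrite !mxE; ring.
Qed.

Lemma Hpow0 (z : 'rV[rat]_m) (p : nat) : ((0%R, z) : H) ^+ p = (0%R, (p%:R *: z)%R).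
Proof.
elim: p => [|p IH]; first by rewrite expg0 HoneE scale0r.
rewrite expgS IH HmulE /= B0l addr0 ?add0r; congr pair.
by rewrite addr0 -natr1 scalerDl scale1r addrC.
Qed.

Lemma Hzexpg0 (z : 'rV[rat]_m) (k : int) :
  zexpg ((0%R, z) : H) k = (0%R, ((k%:~R : rat) *: z)%R).
Proof.
case: k => p /=; first by rewrite Hpow0.
rewrite Hpow0 HinvE /= B0l oppr0 addr0; congr pair.
by rewrite NegzE mulrNz scaleNr.
Qed.

Lemma Hprod0 (I : finType) (z : I -> 'rV[rat]_m) :
  \prod_i ((0%R, z i) : H) = (0%R, (\sum_i z i)%R).
Proof.
apply: (big_rec2 (fun (g : H) (s : 'rV[rat]_m) => g = (0%R, s))) => //.
by move=> i g s _ ->; rewrite HmulE /= B0l !addr0.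
Qed.

End HLemmas.

Definition Lz {n m : nat} (lam : 'I_n -> 'I_n -> 'I_m -> int) (i j : 'I_n) (t : 'I_m) : int :=
  ((if (i < j)%N then lam i j t else 0) - (if (j < i)%N then lam j i t else 0))%R.
Definition LamQ {n m : nat} (lam : 'I_n -> 'I_n -> 'I_m -> int) (i j : 'I_n) : 'rV[rat]_m :=
  \row_t (((Lz lam i j t)%:~R : rat) / 2)%R.
Definition LzQ {n m : nat} (lam : 'I_n -> 'I_n -> 'I_m -> int) (i j : 'I_n) : 'rV[rat]_m :=
  \row_t ((Lz lam i j t)%:~R : rat).

Section BL.
Variables (n m : nat) (lam : 'I_n -> 'I_n -> 'I_m -> int).
Local Open Scope ring_scope.
Local Notation Lam := (LamQ lam).
Local Notation B := (Bf Lam).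

Lemma Lz_anti i j t : Lz lam j i t = - Lz lam i j t.
Proof. by rewrite /Lz opprB. Qed.

Lemma Lam_anti i j : Lam j i = - Lam i j.
Proof. by apply/rowP => t; rewrite !mxE Lz_anti mulrNz mulNr. Qed.

Lemma B_anti x y : B y x = - B x y.
Proof.
rewrite /Bf exchange_big -sumrN; apply: eq_bigr => i _; rewrite -sumrN.
by apply: eq_bigr => j _; rewrite Lam_anti scalerN mulrC.
Qed.

Lemma Bxx x : B x x = 0.
Proof.
have h := B_anti x x; have : (2%:R : rat) *: B x x = 0.
  by rewrite scaler_nat mulr2n {1}h addNr.
by move/eqP; rewrite scaler_eq0 pnatr_eq0 /= => /eqP.
Qed.

Definition BL x y := B x y - B y x.

Lemma BL_expand x y :
  BL x y = \sum_i \sum_j (x 0 i * y 0 j) *: LzQ lam i j.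
Proof.
rewrite /BL (B_anti x y) opprK /Bf -big_split; apply: eq_bigr => i _ /=.
rewrite -big_split; apply: eq_bigr => j _ /=; rewrite -scalerDr.
congr (_ *: _); apply/rowP => t; rewrite !mxE; by field.
Qed.

Lemma BL_delta_l i y :
  BL (delta_mx 0 i) y = \sum_j (y 0 j) *: LzQ lam i j.
Proof.
rewrite BL_expand (bigD1 i) //= [X in _ + X = _]big1 ?addr0 => [|k ki].
  by apply: eq_bigr => j _; rewrite mxE !eqxx mul1r.
by apply: big1 => j _; rewrite mxE (negbTE ki) andbF mul0r scale0r.
Qed.

Lemma BL_lin x y : BL x y = \sum_i x 0 i *: BL (delta_mx 0 i) y.
Proof.
rewrite BL_expand; apply: eq_bigr => i _; rewrite BL_delta_l scaler_sumr.
by apply: eq_bigr => j _; rewrite scalerA.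
Qed.

Lemma BL_dd i j : BL (delta_mx 0 i) (delta_mx 0 j) = LzQ lam i j.
Proof.
rewrite BL_delta_l (bigD1 j) //= [X in _ + X = _]big1 ?addr0 => [|k kj].
  by rewrite mxE !eqxx scale1r.
by rewrite mxE (negbTE kj) andbF scale0r.
Qed.

Lemma BL0l y : BL 0 y = 0.
Proof. by rewrite /BL B0l B0r subrr. Qed.
End BL.

Section GenComm.
Variable G : groupType.
Local Open Scope group_scope.
Implicit Types x y z : G.
Lemma commMgJ' x y z : [~ x * y, z] = [~ x, z] ^ y * [~ y, z].
Proof. by rewrite !commgEr conjgM mulgA -conjMg mulgK. Qed.
Lemma conj_center k y : center k -> k ^ y = k.
Proof. by move=> ck; rewrite conjgE -ck mulKg. Qed.
Lemma comm_center_V (Kp : G -> Prop) v w :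
  (forall x, Kp x -> center x) -> (forall x, Kp x -> Kp x^-1) ->
  Kp [~ v, w] -> Kp [~ v^-1, w].
Proof.
move=> KC KV kv; have h := commMgJ' v^-1 v w; rewrite mulVg comm1g in h.
have h2 := mulg1_eq (esym h).
have e : [~ v^-1, w] ^ v = [~ v, w]^-1 by rewrite -h2 invgK.
have -> : [~ v^-1, w] = [~ v, w]^-1.
  by rewrite -[LHS](conjgK v) e conj_center //; apply/centerV/KC.
exact: KV.
Qed.
Lemma comm_center_M (Kp : G -> Prop) u v w :
  (forall x, Kp x -> center x) -> (forall x y, Kp x -> Kp y -> Kp (x * y)) ->
  Kp [~ u, w] -> Kp [~ v, w] -> Kp [~ u * v, w].
Proof.
move=> KC KM ku kv; rewrite commMgJ' conj_center; [exact: KM | exact: KC].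
Qed.
Lemma comm_eq x w k : x * w = w * x * k -> [~ x, w] = k.
Proof. by move=> h; apply: (mulgI (w * x)); rewrite -commgC h. Qed.
Lemma fhom1 (H : groupType) (f : G -> H) : (forall x y, f (x * y) = f x * f y) -> f 1 = 1.
Proof.
move=> fM; have h := fM 1 1; rewrite mulg1 in h.
by apply: (mulgI (f 1)); rewrite -h mulg1.
Qed.
Lemma fhomV (H : groupType) (f : G -> H) : (forall x y, f (x * y) = f x * f y) ->
  forall x, f x^-1 = (f x)^-1.
Proof.
move=> fM x; apply/esym/mulg1_eq; rewrite -fM mulgV; exact: fhom1.
Qed.
End GenComm.

Section Main.
Variables (n m : nat) (lam : 'I_n -> 'I_n -> 'I_m -> int) (G : groupType)
  (a : 'I_n -> G) (c : 'I_m -> G).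
Hypothesis hrel : pres_rels lam a c.
Hypothesis hgen : forall x : G, gen (fun y => range a y \/ range c y) x.
Local Notation H := (@Hty n m (LamQ lam)).
Variable f : G -> H.
Hypothesis fM : forall x y, f (x * y)%g = (f x * f y)%g.
Hypothesis fa : forall i, f (a i) = (delta_mx 0%R i, 0%R).
Hypothesis fc : forall t, f (c t) = (0%R, delta_mx 0%R t).
Local Open Scope group_scope.

Lemma f1 : f 1 = 1. Proof. exact: fhom1. Qed.
Lemma fV x : f x^-1 = (f x)^-1. Proof. exact: fhomV. Qed.
Lemma fX x p : f (x ^+ p) = f x ^+ p.
Proof. by elim: p => [|p IH]; rewrite ?f1 // !expgS fM IH. Qed.
Lemma fZ x k : f (zexpg x k) = zexpg (f x) k.
Proof. by case: k => p /=; rewrite ?fV fX. Qed.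
Lemma fP (I : finType) (F : I -> G) : f (\prod_i F i) = \prod_i f (F i).
Proof. exact: (big_morph f fM f1). Qed.
Lemma fR x y : f [~ x, y] = [~ f x, f y].
Proof. by rewrite /commg /conjg !fM !fV. Qed.

Definition X x : 'rV[rat]_n := (f x).1.
Definition Y x : 'rV[rat]_m := (f x).2.
Lemma XM x y : X (x * y) = (X x + X y)%R. Proof. by rewrite /X fM. Qed.
Lemma X1 : X 1 = 0%R. Proof. by rewrite /X f1. Qed.
Lemma XV x : X x^-1 = (- X x)%R. Proof. by rewrite /X fV. Qed.
Lemma XX x p : X (x ^+ p) = (p%:R *: X x)%R.
Proof.
elim: p => [|p IH]; first by rewrite X1 scale0r.
by rewrite expgS XM IH -natr1 scalerDl scale1r addrC.
Qed.
Lemma XZ x k : X (zexpg x k) = ((k%:~R : rat) *: X x)%R.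
Proof.
case: k => p /=; first by rewrite XX.
by rewrite XV XX NegzE mulrNz scaleNr.
Qed.
Lemma XP (I : finType) (F : I -> G) : X (\prod_i F i) = (\sum_i X (F i))%R.
Proof. exact: (big_morph X XM X1). Qed.
Lemma Xa i : X (a i) = delta_mx 0%R i. Proof. by rewrite /X fa. Qed.
Lemma Xc t : X (c t) = 0%R. Proof. by rewrite /X fc. Qed.
Lemma Yc t : Y (c t) = delta_mx 0%R t. Proof. by rewrite /Y fc. Qed.
Lemma fXY x : f x = (X x, Y x). Proof. by rewrite /X /Y; case: (f x). Qed.
Lemma YR x y : Y [~ x, y] = BL lam (X x) (X y).
Proof. by rewrite /Y fR HcommE. Qed.
Lemma XR x y : X [~ x, y] = 0%R.
Proof. by rewrite /X fR HcommE. Qed.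

Definition K := gen (range c).

Lemma haa (i j : 'I_n) : (i < j)%N -> [~ a i, a j] = \prod_(t < m) zexpg (c t) (lam i j t).
Proof. by case: hrel => h _; apply: h. Qed.
Lemma hac i t : [~ a i, c t] = 1. Proof. by case: hrel => _ [h _]; apply: h. Qed.
Lemma hcc k r : [~ c k, c r] = 1. Proof. by case: hrel => _ [_ h]; apply: h. Qed.

Lemma c_central t : center (c t).
Proof.
move=> g; apply/esym; move: g (hgen g); apply: gen_ind.
- by rewrite mulg1 mul1g.
- move=> u v hu hv; apply: commuteM => //; exact: commuteV.
- move=> u [[i ->] | [k ->]]; apply/commute_sym/commgP; [by rewrite hac | by rewrite hcc].
Qed.
Lemma K_central x : K x -> center x.
Proof. apply: center_gen => y [t ->]; exact: c_central. Qed.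
Lemma K1 : K 1. Proof. exact: gen1. Qed.
Lemma KM x y : K x -> K y -> K (x * y). Proof. exact: genM. Qed.
Lemma KV x : K x -> K x^-1. Proof. exact: genV. Qed.
Lemma Kc t : K (c t). Proof. by apply: gen_sub; exists t. Qed.
Lemma KP (I : finType) (F : I -> G) : (forall i, K (F i)) -> K (\prod_i F i).
Proof. exact: gen_prod. Qed.
Lemma KZ x k : K x -> K (zexpg x k). Proof. exact: gen_zexpg. Qed.

Lemma comm_K_left w : (forall i, K [~ a i, w]) -> forall v, K [~ v, w].
Proof.
move=> ha v; move: v (hgen v); apply: gen_ind.
- by rewrite comm1g; exact: K1.
- move=> u v ku kv; apply: (@comm_center_M _ K) => //; [exact: K_central | exact: KM |].
  apply: (@comm_center_V _ K) => //; [exact: K_central | exact: KV].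
- move=> u [[i ->] | [t ->]]; first exact: ha.
  by have /commgP/eqP -> : commute (c t) w by apply/esym/c_central; exact: K1.
Qed.

Lemma comm_K v w : K [~ v, w].
Proof.
have ha : forall i j, K [~ a i, a j].
  move=> i j; case: (ltngtP i j) => hij.
  - by rewrite haa //; apply: KP => t; apply: KZ; exact: Kc.
  - by rewrite -invgR haa //; apply: KV; apply: KP => t; apply: KZ; exact: Kc.
  - by rewrite (val_inj hij) commgg; exact: K1.
have hv : forall i, K [~ v, a i].
  by move=> i; apply: comm_K_left => j; exact: ha.
rewrite -invgR; apply: KV; apply: comm_K_left => i.
by rewrite -invgR; apply: KV.
Qed.

Lemma two_step : two_step_nilpotent G.
Proof. move=> g h; apply: K_central; exact: comm_K. Qed.

Definition eqK g h := K (g^-1 * h).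
Lemma eqK_refl g : eqK g g. Proof. by rewrite /eqK mulVg; exact: K1. Qed.
Lemma eqK_sym g h : eqK g h -> eqK h g.
Proof. by rewrite /eqK => /KV; rewrite invgM invgK. Qed.
Lemma eqK_trans g h l : eqK g h -> eqK h l -> eqK g l.
Proof. by rewrite /eqK => k1 k2; have := KM k1 k2; rewrite mulgA mulgK. Qed.
Lemma eqK_mul g1 h1 g2 h2 : eqK g1 h1 -> eqK g2 h2 -> eqK (g1 * g2) (h1 * h2).
Proof.
rewrite /eqK => k1 k2; have := KM k1 k2.
have -> : g1^-1 * h1 * (g2^-1 * h2) = g2^-1 * (g1^-1 * h1) * h2.
  by rewrite mulgA -(K_central k1 g2^-1) !mulgA.
by rewrite invgM !mulgA.
Qed.
Lemma eqK_comm x w : eqK (x * w) (w * x).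
Proof.
rewrite /eqK invgM; have := comm_K w x.
by rewrite /commg /conjg !mulgA.
Qed.
Lemma eqK_K g h : eqK g h -> exists k, K k /\ h = g * k.
Proof. by move=> e; exists (g^-1 * h); split => //; rewrite mulVKg. Qed.

Lemma KL (F F' : 'I_n -> G) (i : 'I_n) w (s : seq 'I_n) :
  (forall j, j != i -> F' j = F j) -> eqK (F i * w) (F' i) -> uniq s -> i \in s ->
  eqK ((\prod_(j <- s) F j) * w) (\prod_(j <- s) F' j).
Proof.
move=> hF hi; elim: s => [|j s IH] //= /andP[js us]; rewrite !big_cons.
case: (eqVneq j i) => [eji _ | ji]; last first.
  rewrite inE eq_sym (negbTE ji) /= => is_.
  rewrite -mulgA hF //; apply: eqK_mul; [exact: eqK_refl | exact: IH].
subst j.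
have -> : \prod_(j <- s) F' j = \prod_(j <- s) F j.
  apply: eq_big_seq => k ks; apply: hF; apply: contraNneq js => <-.
  by [].
apply: (@eqK_trans _ (F i * (w * \prod_(j <- s) F j))).
  rewrite -mulgA; apply: eqK_mul; [exact: eqK_refl | exact: eqK_comm].
rewrite mulgA; apply: eqK_mul => //; exact: eqK_refl.
Qed.

Definition A (x : 'I_n -> int) := \prod_(j < n) zexpg (a j) (x j).
Definition NF g := exists x, exists k, K k /\ g = A x * k.

Definition upd (x : 'I_n -> int) (i : 'I_n) (e : int) : 'I_n -> int :=
  fun j => if j == i then (x j + e)%R else x j.

Lemma A_step x i e : eqK (A x * zexpg (a i) e) (A (upd x i e)).
Proof.
apply: (@KL _ _ i).
- by move=> j ji; rewrite /upd (negbTE ji).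
- by rewrite /upd eqxx zexpgD; exact: eqK_refl.
- exact: index_enum_uniq.
- exact: mem_index_enum.
Qed.

Lemma NF_a h i e : NF h -> NF (h * zexpg (a i) e).
Proof.
move=> [x [k [kk ->]]].
have [k' [kk' e']] := eqK_K (eqK_sym (A_step x i e)).
exists (upd x i e), (k' * k); split; first exact: KM.
by rewrite -mulgA -(K_central kk) mulgA e' -!mulgA.
Qed.

Lemma NF_K h k : NF h -> K k -> NF (h * k).
Proof.
move=> [x [k0 [kk0 ->]]] kk; exists x, (k0 * k); split; [exact: KM | by rewrite mulgA].
Qed.

Lemma A0 : A (fun _ => 0%R) = 1.
Proof. by rewrite /A big1. Qed.

Lemma NF_all g : NF g.
Proof.
suff P : forall g h, NF h <-> NF (h * g).
  have h1 : NF 1 by exists (fun _ => 0%R), 1; split; [exact: K1 | rewrite A0 mulg1].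
  by have := proj1 (P g 1) h1; rewrite mul1g.
move=> g0; move: g0 (hgen g0); apply: gen_ind.
- by move=> h; rewrite mulg1.
- move=> u v Pu Pv h; split => Hh.
  + apply: (proj2 (Pv (h * (u * v^-1)))); rewrite -!mulgA mulVg mulg1.
    exact: (proj1 (Pu h)).
  + apply: (proj2 (Pu h)); move: (proj1 (Pv _) Hh).
    by rewrite -!mulgA mulVg mulg1.
- move=> y [[i ->]|[t ->]] h; split => Hh.
  + by have := NF_a i 1 Hh; rewrite zexpg1.
  + by have := NF_a i (-1) Hh; rewrite zexpgN1 mulgK.
  + apply: NF_K => //; exact: Kc.
  + by have := NF_K Hh (KV (Kc t)); rewrite mulgK.
Qed.

Lemma XA x : X (A x) = (\row_j ((x j)%:~R : rat))%R.
Proof.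
rewrite /A XP (row_sum_delta ((\row_j ((x j)%:~R : rat))%R)).
by apply: eq_bigr => j _; rewrite XZ Xa mxE.
Qed.

Lemma XK k : K k -> X k = 0%R.
Proof.
move: k; apply: gen_ind; first exact: X1.
  by move=> u v hu hv; rewrite XM XV hu hv subrr.
by move=> u [t ->]; exact: Xc.
Qed.

Lemma YM0 u v : X u = 0%R -> Y (u * v) = (Y u + Y v)%R.
Proof. by move=> hu; rewrite /Y fM HmulE /= -/(X u) hu B0l addr0. Qed.
Lemma YV0 u : X u = 0%R -> Y u^-1 = (- Y u)%R.
Proof. by move=> hu; rewrite /Y fV HinvE /= -/(X u) hu B0l addr0. Qed.

Definition C (u : 'I_m -> int) := \prod_(t < m) zexpg (c t) (u t).

Lemma fC u : f (C u) = (0%R, (\row_t ((u t)%:~R : rat))%R).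
Proof.
rewrite /C fP.
have -> : \prod_(t < m) f (zexpg (c t) (u t)) =
   \prod_(t < m) ((0%R, (((u t)%:~R : rat) *: delta_mx 0%R t)%R) : H).
  by apply: eq_bigr => t _; rewrite fZ fc Hzexpg0.
rewrite Hprod0 (row_sum_delta (\row_t ((u t)%:~R : rat))%R); congr pair.
by apply: eq_bigr => t _; rewrite mxE.
Qed.

Lemma YC u : Y (C u) = (\row_t ((u t)%:~R : rat))%R.
Proof. by rewrite /Y fC. Qed.
Lemma XC u : X (C u) = 0%R.
Proof. by rewrite /X fC. Qed.
Lemma KC u : K (C u).
Proof. by apply: KP => t; apply: KZ; exact: Kc. Qed.

Lemma C_add u v : C u * C v = C (fun t => u t + v t)%R.
Proof.
rewrite /C -prodgM_commute; first by apply: eq_bigr => t _; rewrite zexpgD.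
move=> i j _ _; apply: commute_zexpg; exact: c_central.
Qed.
Lemma C_ext u v : (forall t, u t = v t) -> C u = C v.
Proof. by move=> h; apply: eq_bigr => t _; rewrite h. Qed.
Lemma C0 : C (fun _ => 0%R) = 1.
Proof. by rewrite /C big1. Qed.
Lemma C_neg v : (C v)^-1 = C (fun t => - v t)%R.
Proof.
apply: mulg1_eq; rewrite C_add -C0; apply: C_ext => t.
by rewrite subrr.
Qed.

Lemma K_C k : K k -> exists u, k = C u.
Proof.
move: k; apply: gen_ind.
- by exists (fun _ => 0%R); rewrite C0.
- move=> _ _ [u ->] [v ->]; exists (fun t => u t - v t)%R.
  by rewrite C_neg C_add.
- move=> _ [t ->]; exists (fun s => if s == t then 1%R else 0%R).
  rewrite /C (@big_only1 _ _ _ _ t) //= ?eqxx ?zexpg1 // => s st _.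
  by rewrite (negbTE st).
Qed.

Lemma K_inj k : K k -> Y k = 0%R -> k = 1.
Proof.
move=> /K_C [u ->]; rewrite YC => h.
rewrite -C0; apply: C_ext => t.
by have := congr1 (fun v : 'rV[rat]_m => v 0%R t) h; rewrite !mxE /= => /eqP; rewrite intr_eq0 => /eqP.
Qed.

Lemma K_eq k k' : K k -> K k' -> Y k = Y k' -> k = k'.
Proof.
move=> kk kk' e; have h : k^-1 * k' = 1.
  apply: K_inj; first by apply: KM => //; exact: KV.
  by rewrite YM0 ?YV0 ?e ?addNr //; [exact: XK | rewrite XV XK // oppr0].
by apply: (mulgI k^-1); rewrite h mulVg.
Qed.

Lemma X0_K g : X g = 0%R -> K g.
Proof.
have [x [k [kk ->]]] := NF_all g; rewrite XM XA XK // addr0 => h.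
have -> : A x = 1.
  rewrite /A big1 // => j _.
  by have := congr1 (fun v : 'rV[rat]_n => v 0%R j) h; rewrite !mxE /= => /eqP; rewrite intr_eq0 => /eqP ->.
by rewrite mul1g.
Qed.

Lemma f_inj g : f g = 1 -> g = 1.
Proof.
move=> h; have hx : X g = 0%R by rewrite /X h.
apply: K_inj; [exact: X0_K | by rewrite /Y h].
Qed.

Lemma row_int_eq0 (k : nat) (u : 'I_k -> int) :
  (\row_t ((u t)%:~R : rat))%R = 0%R -> forall t, u t = 0%R.
Proof.
move=> h t; have := congr1 (fun v : 'rV[rat]_k => v 0%R t) h.
by rewrite !mxE /= => /eqP; rewrite intr_eq0 => /eqP.
Qed.

Lemma part_fin_gen : fin_gen G.
Proof.
exists ([seq a i | i <- enum 'I_n] ++ [seq c t | t <- enum 'I_m]) => x.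
apply: gen_mono (hgen x) => y [[i ->]|[t ->]]; rewrite mem_cat.
  by rewrite map_f // mem_enum.
by rewrite orbC map_f // mem_enum.
Qed.

Lemma YX0 x p : X x = 0%R -> Y (x ^+ p) = (p%:R *: Y x)%R.
Proof.
move=> hx; elim: p => [|p IH]; first by rewrite /Y f1 scale0r.
by rewrite expgS YM0 // IH -natr1 scalerDl scale1r addrC.
Qed.

Lemma part_torsion : torsion_free G.
Proof.
move=> x k kpos hk.
have hx : X x = 0%R.
  have := XX x k; rewrite hk X1 => /esym/eqP; rewrite scaler_eq0 pnatr_eq0.
  by rewrite eqn0Ngt kpos /= => /eqP.
apply: K_inj; first exact: X0_K.
have := YX0 k hx; rewrite hk /Y f1 /= => /esym/eqP; rewrite scaler_eq0 pnatr_eq0.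
by rewrite eqn0Ngt kpos /= => /eqP.
Qed.

Lemma part_malcev : malcev_basis a c.
Proof.
split; first by move=> s t; apply/esym/c_central.
split.
  move=> u hu t; apply: (row_int_eq0 (u := u)).
  by rewrite -YC; rewrite /C hu /Y f1.
split.
  move=> x; apply: gen_gen => y [g [h ->]]; exact: comm_K.
split; first by move=> x; exact: K_central.
split; first by move=> g h; exact: comm_K.
split.
  move=> g; have [x [k [kk ->]]] := NF_all g; exists x.
  by rewrite mulKg.
move=> u hu i; apply: (row_int_eq0 (u := u)).
by rewrite -XA XK.
Qed.

Lemma center_crit g : center g <-> (forall i, BL lam (delta_mx 0%R i) (X g) = 0%R).
Proof.
split.
  move=> cg i; have : [~ a i, g] = 1 by apply/eqP/commgP; rewrite /commute cg.
  by move/(congr1 Y); rewrite YR Xa /Y f1.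
move=> h x; apply/commgP/eqP; apply: K_inj; first exact: comm_K.
rewrite YR BL_lin big1 // => i _; by rewrite h scaler0.
Qed.

Definition Mz : 'M[int]_(n, n * m) :=
  (\matrix_(j, p) (mxvec (\matrix_(i < n, t < m) Lz lam i j t)) 0%R p)%R.
Definition Mq : 'M[rat]_(n, n * m) := map_mx intr Mz.

Lemma Mq_entry (y : 'rV[rat]_n) i t :
  (y *m Mq)%R 0%R (mxvec_index i t) = (BL lam (delta_mx 0%R i) y) 0%R t.
Proof.
rewrite BL_delta_l !mxE summxE; apply: eq_bigr => j _.
by rewrite !mxE mxvecE mxE.
Qed.

Lemma Mq_crit (y : 'rV[rat]_n) :
  (y *m Mq)%R = 0%R <-> (forall i, BL lam (delta_mx 0%R i) y = 0%R).
Proof.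
split.
  move=> h i; apply/rowP => t; rewrite -Mq_entry h !mxE //.
move=> h; apply/rowP => p; case/mxvec_indexP: p => i t.
by rewrite Mq_entry h !mxE.
Qed.

Lemma center_critM g : center g <-> (X g *m Mq)%R = 0%R.
Proof. by rewrite Mq_crit; exact: center_crit. Qed.

Section CenterPart.
Hypothesis hm : (0 < m)%N.
Variables (L : 'M[int]_n) (R : 'M[int]_(n * m)) (d : seq int).
Hypotheses (hL : L \in unitmx) (hR : R \in unitmx) (hd : sorted dvdz d).
Hypothesis hMz : Mz = (L *m (\matrix_(i, j) (d`_i *+ (i == j :> nat))) *m R)%R.

Definition rr := minn (find (fun x => x == 0%R) d) n.
Lemma rr_le : (rr <= n)%N. Proof. exact: geq_minr. Qed.
Lemma d_nz (p : nat) : (p < rr)%N -> (d`_p != 0)%R.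
Proof.
move=> hp; have hf : (p < find (fun x => x == 0%R) d)%N.
  by apply: leq_trans hp (geq_minl _ _).
by have := before_find (0%R : int) hf => /= ->.
Qed.
Lemma d_z (p : nat) : (rr <= p)%N -> (p < n)%N -> (d`_p = 0)%R.
Proof.
move=> h1 h2; have hf : (find (fun x => x == 0%R) d <= p)%N.
  move: h1; rewrite /rr geq_min => /orP[] //; by rewrite leqNgt h2.
case: (ltnP p (size d)) => ps; last by rewrite nth_default.
have hh : has (fun x => x == 0%R) d by rewrite has_find (leq_ltn_trans hf ps).
have := nth_find (0%R : int) hh => /= /eqP h0.
have := @sorted_leq_nth _ dvdz (fun y x z => @dvdz_trans y x z) dvdzz (0%R : int) d hd
  (find (fun x => x == 0%R) d) p.
rewrite !inE (leq_ltn_trans hf ps) ps h0 => /(_ isT isT hf).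
by move=> h; apply/eqP; rewrite -dvd0z; exact: h.
Qed.

Local Open Scope ring_scope.
Definition Lq := map_mx (intr : int -> rat) L.
Definition Rq := map_mx (intr : int -> rat) R.
Definition Liq := map_mx (intr : int -> rat) (invmx L).
Definition Riq := map_mx (intr : int -> rat) (invmx R).
Definition Dq : 'M[rat]_(n, n * m) := \matrix_(i, j) ((d`_i)%:~R *+ (i == j :> nat)).

Lemma Mq_dec : Mq = Lq *m Dq *m Rq.
Proof.
rewrite /Mq hMz !map_mxM; congr (_ *m _ *m _).
by apply/matrixP => i j; rewrite !mxE rmorphMn.
Qed.
Lemma LLi : Lq *m Liq = 1%:M.
Proof. by rewrite /Lq /Liq -map_mxM mulmxV // map_mx1. Qed.
Lemma LiL : Liq *m Lq = 1%:M.
Proof. by rewrite /Lq /Liq -map_mxM mulVmx // map_mx1. Qed.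
Lemma RRi : Rq *m Riq = 1%:M.
Proof. by rewrite /Rq /Riq -map_mxM mulmxV // map_mx1. Qed.

Lemma ker_crit (y : 'rV[rat]_n) :
  (y *m Mq = 0) <-> (forall p : 'I_n, (p < rr)%N -> (y *m Lq) 0 p = 0).
Proof.
rewrite Mq_dec !mulmxA.
have e1 : (y *m Lq *m Dq *m Rq = 0) <-> (y *m Lq *m Dq = 0).
  split => h; last by rewrite h mul0mx.
  by rewrite -[y *m Lq *m Dq]mulmx1 -RRi mulmxA h mul0mx.
split.
- move/e1 => h p hp.
  have hpnm : (p < n * m)%N by apply: leq_trans (ltn_ord p) _; rewrite leq_pmulr.
  have := congr1 (fun v : 'rV[rat]_(n * m) => v 0 (Ordinal hpnm)) h.
  rewrite !mxE (bigD1 p) //= big1 => [|q qp]; last first.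
    have qp2 : (q == p :> nat) = false by apply/negbTE.
    by rewrite [Dq _ _]mxE /= qp2 mulr0n mulr0.
  rewrite [Dq _ _]mxE /= eqxx mulr1n addr0 => /eqP; rewrite mulf_eq0 intr_eq0.
  by rewrite (negbTE (d_nz hp)) orbF mxE => /eqP.
- move=> h; apply/e1; apply/rowP => q; rewrite [LHS]mxE [RHS]mxE big1 // => p _.
  rewrite [Dq _ _]mxE.
  case: (ltnP p rr) => hp; first by rewrite h // mul0r.
  by rewrite d_z // mul0rn mulr0.
Qed.

Lemma center_crit2 g :
  center g <-> (forall p : 'I_n, (p < rr)%N -> (X g *m Lq) 0 p = 0).
Proof.
split; first by move/center_critM/ker_crit.
by move=> h; apply/center_critM/ker_crit.
Qed.

Lemma ixP (s : 'I_(n - rr)) : (rr + s < n)%N.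
Proof. have := ltn_ord s; have := rr_le; lia. Qed.
Definition ix (s : 'I_(n - rr)) : 'I_n := Ordinal (ixP s).
Definition iw (p : 'I_rr) : 'I_n := widen_ord rr_le p.
Definition rowA (k : 'I_n) := A (fun j => invmx L k j).
Definition Dd s := rowA (ix s).
Definition Ee p := rowA (iw p).

Lemma XrowA k : X (rowA k) = row k Liq.
Proof. by rewrite /rowA XA; apply/rowP => j; rewrite !mxE. Qed.
Lemma XrowAL k : X (rowA k) *m Lq = delta_mx 0 k.
Proof. by rewrite XrowA -row_mul LiL row1. Qed.

Lemma rank_lb (N r' : nat) (Gm : 'M[rat]_(r', N)) :
  (forall p : 'I_N, ((delta_mx 0 p : 'rV[rat]_N) <= Gm)%MS) -> (N <= r')%N.
Proof.
move=> h; have h1 : ((1%:M : 'M[rat]_N) <= Gm)%MS by apply/row_subP => p; rewrite row1.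
have := mxrankS h1; rewrite mxrank1 => h2; exact: leq_trans h2 (rank_leq_row Gm).
Qed.

Lemma zint_of g : exists z : 'rV[int]_n, X g *m Lq = map_mx intr z.
Proof.
have [y [k [kk ->]]] := NF_all g; exists ((\row_j y j) *m L).
rewrite XM (XK kk) addr0 XA map_mxM; congr (_ *m _); apply/rowP => j; rewrite !mxE.
by [].
Qed.

Lemma ix_ge s : (rr <= ix s)%N. Proof. by rewrite /= leq_addr. Qed.
Lemma ix_surj (j : 'I_n) : (rr <= j)%N -> exists s, ix s = j.
Proof.
move=> hj; have hs : (j - rr < n - rr)%N by have:= ltn_ord j; lia.
by exists (Ordinal hs); apply: val_inj => /=; lia.
Qed.
Lemma iw_surj (j : 'I_n) : (j < rr)%N -> exists p, iw p = j.
Proof. by move=> hj; exists (Ordinal hj); exact: val_inj. Qed.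
Lemma ix_inj : injective ix.
Proof. move=> s s' /(congr1 val) /= h; apply: val_inj => /=; lia. Qed.
Lemma iw_inj : injective iw.
Proof. by move=> s s' /(congr1 val) /= h; apply: val_inj. Qed.

Lemma sum_ix_lt (v : 'I_(n - rr) -> rat) (j : 'I_n) : (j < rr)%N ->
  (\sum_s v s *: delta_mx 0 (ix s) : 'rV[rat]_n) 0 j = 0.
Proof.
move=> hj; rewrite summxE big1 // => s _; rewrite !mxE.
have -> : (j == ix s) = false.
  by apply/negbTE/eqP => e; have := ix_ge s; rewrite -e; lia.
by rewrite andbF mulr0.
Qed.
Lemma sum_ix_at (v : 'I_(n - rr) -> rat) s0 :
  (\sum_s v s *: delta_mx 0 (ix s) : 'rV[rat]_n) 0 (ix s0) = v s0.
Proof.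
rewrite summxE (bigD1 s0) //= big1 => [|s ss0]; first by rewrite !mxE !eqxx mulr1 addr0.
by rewrite !mxE (inj_eq ix_inj) eq_sym (negbTE ss0) andbF mulr0.
Qed.
Lemma sum_iw_at (v : 'I_rr -> rat) p0 :
  (\sum_p v p *: delta_mx 0 (iw p) : 'rV[rat]_n) 0 (iw p0) = v p0.
Proof.
rewrite summxE (bigD1 p0) //= big1 => [|s ss0]; first by rewrite !mxE !eqxx mulr1 addr0.
by rewrite !mxE (inj_eq iw_inj) eq_sym (negbTE ss0) andbF mulr0.
Qed.

Lemma cancelL (y z : 'rV[rat]_n) : y *m Lq = z *m Lq -> y = z.
Proof. by move=> h; rewrite -[y]mulmx1 -[z]mulmx1 -LLi !mulmxA h. Qed.

Lemma XP_Dd v : X (\prod_s zexpg (Dd s) (v s)) *m Lq =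
  \sum_s ((v s)%:~R : rat) *: delta_mx 0 (ix s).
Proof. rewrite XP mulmx_suml; apply: eq_bigr => s _; by rewrite XZ -scalemxAl XrowAL. Qed.
Lemma XP_Ee v : X (\prod_p zexpg (Ee p) (v p)) *m Lq =
  \sum_p ((v p)%:~R : rat) *: delta_mx 0 (iw p).
Proof. rewrite XP mulmx_suml; apply: eq_bigr => s _; by rewrite XZ -scalemxAl XrowAL. Qed.

Lemma Dd_central s : center (Dd s).
Proof.
apply/center_crit2 => p hp; rewrite XrowAL mxE.
have -> : (p == ix s) = false.
  by apply/negbTE/eqP => e; have := ix_ge s; rewrite -e; lia.
by rewrite andbF.
Qed.

Lemma center_gen_cd x : center x -> gen (fun y => range c y \/ range Dd y) x.
Proof.
move=> cx; have [z hz] := zint_of x.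
set P := (\prod_(s < n - rr) zexpg (Dd s) (z 0 (ix s)))%g.
have hP : X P = X x.
  apply: cancelL; rewrite XP_Dd hz; apply/rowP => j.
  case: (ltnP j rr) => hj.
    rewrite sum_ix_lt //; have := proj1 (center_crit2 x) cx j hj.
    by rewrite hz => ->.
  by have [s0 <-] := ix_surj hj; rewrite sum_ix_at mxE.
have kx : K (P^-1 * x)%g by apply: X0_K; rewrite XM XV hP addNr.
rewrite -(mulVKg P x); apply: genM.
  apply: gen_prod => s; apply: gen_zexpg; apply: gen_sub; right; by exists s.
apply: gen_mono kx => y [t ->]; left; by exists t.
Qed.

Lemma cb : center_basis c Dd.
Proof.
split; first exact: c_central.
split; first exact: Dd_central.
split.
  move=> x; split; first exact: center_gen_cd.
  apply: center_gen => y [[t ->]|[s ->]]; [exact: c_central | exact: Dd_central].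
move=> u v h.
have hv : forall s, v s = 0.
  have hX := congr1 X h; rewrite XM XC add0r X1 in hX.
  have := congr1 (fun w => w *m Lq) hX; rewrite /= XP_Dd mul0mx => h0 s.
  have := congr1 (fun w : 'rV[rat]_n => w 0 (ix s)) h0; rewrite /= sum_ix_at mxE.
  by move/eqP; rewrite intr_eq0 => /eqP.
split=> //.
have hP : (\prod_(i < n - rr) zexpg (Dd i) (v i))%g = 1%g.
  by apply: big1 => s _; rewrite hv.
rewrite hP mulg1 in h.
by apply: (row_int_eq0 (u := u)); rewrite -YC /C h /Y f1.
Qed.

Lemma Ee_gen x : gen (fun y => center y \/ range Ee y) x.
Proof.
have [z hz] := zint_of x.
set P := (\prod_(p < rr) zexpg (Ee p) (z 0 (iw p)))%g.
have cx : center (P^-1 * x)%g.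
  apply/center_crit2 => j hj; rewrite XM XV mulmxDl mulNmx XP_Ee hz.
  have [p0 <-] := iw_surj hj.
  by rewrite [LHS]mxE [X in X + _]mxE sum_iw_at mxE addNr.
rewrite -(mulVKg P x); apply: genM.
  apply: gen_prod => p; apply: gen_zexpg; apply: gen_sub; right; by exists p.
by apply: gen_sub; left.
Qed.

Definition theta x : 'rV[rat]_rr := \row_(p < rr) (X x *m Lq) 0 (iw p).
Lemma thetaM x y : theta (x * y)%g = theta x + theta y.
Proof. by rewrite /theta XM mulmxDl; apply/rowP => p; rewrite !mxE. Qed.
Lemma thetaV x : theta x^-1%g = - theta x.
Proof. by rewrite /theta XV mulNmx; apply/rowP => p; rewrite !mxE. Qed.
Lemma theta1 : theta 1%g = 0.
Proof. by rewrite /theta X1 mul0mx; apply/rowP => p; rewrite !mxE. Qed.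
Lemma theta_center x : center x -> theta x = 0.
Proof.
move=> cx; apply/rowP => p; rewrite [LHS]mxE [RHS]mxE (proj1 (center_crit2 x) cx) //.
exact: (ltn_ord p).
Qed.
Lemma theta_Ee p : theta (Ee p) = delta_mx 0 p.
Proof. by rewrite /theta XrowAL; apply/rowP => q; rewrite !mxE (inj_eq iw_inj). Qed.

Lemma quot_lb r' (g : 'I_r' -> G) :
  (forall x, gen (fun y => center y \/ range g y) x) -> (rr <= r')%N.
Proof.
move=> hg; pose Gm := \matrix_(j < r') theta (g j).
have sp : forall x, (theta x <= Gm)%MS.
  move=> x; move: x (hg x); apply: gen_ind.
  - by rewrite theta1 sub0mx.
  - move=> u v hu hv; rewrite thetaM thetaV -scaleN1r.
    by apply: addmx_sub => //; exact: scalemx_sub.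
  - move=> y [cy|[j ->]]; first by rewrite theta_center // sub0mx.
    by have := row_sub j Gm; rewrite rowK.
apply: rank_lb => p; rewrite -theta_Ee; exact: sp.
Qed.

Lemma quot_rank : is_rank_quot_center G rr.
Proof. split; [by exists Ee; exact: Ee_gen | exact: quot_lb]. Qed.

Definition cd (i : 'I_(m + (n - rr))) : G :=
  match split i with inl t => c t | inr s => Dd s end.
Lemma cd_central i : center (cd i).
Proof. by rewrite /cd; case: split => ?; [exact: c_central | exact: Dd_central]. Qed.
Lemma center_iff_cd x : center x <-> gen (range cd) x.
Proof.
split.
  move/center_gen_cd; apply: gen_mono => y [[t ->]|[s ->]].
    by exists (lshift _ t); rewrite /cd (unsplitK (inl _ t)).
  by exists (rshift _ s); rewrite /cd (unsplitK (inr _ s)).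
by apply: center_gen => y [i ->]; exact: cd_central.
Qed.

Definition thc x : 'rV[rat]_(m + (n - rr)) :=
  row_mx (Y x) (\row_(s < n - rr) (X x *m Lq) 0 (ix s)).

Lemma BL_2B x y : BL lam x y = 2%:R *: Bf (LamQ lam) x y.
Proof. by rewrite /BL (B_anti lam x y) opprK scaler_nat mulr2n. Qed.

Lemma B_central x y : center x -> Bf (LamQ lam) (X x) (X y) = 0.
Proof.
move=> cx; have h : [~ x, y]%g = 1%g by apply/eqP/commgP; exact: (esym (cx y)).
have := congr1 Y h; rewrite YR BL_2B /Y f1 /= => /eqP.
by rewrite scaler_eq0 pnatr_eq0 /= => /eqP.
Qed.

Lemma thcM x y : center x -> thc (x * y)%g = thc x + thc y.
Proof.
move=> cx; rewrite /thc add_row_mx; congr row_mx.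
  by rewrite /Y fM HmulE /= -/(X x) -/(X y) B_central // addr0.
by rewrite XM mulmxDl; apply/rowP => p; rewrite !mxE.
Qed.
Lemma thcV x : thc x^-1%g = - thc x.
Proof.
rewrite /thc opp_row_mx; congr row_mx.
  by rewrite /Y fV HinvE /= -/(X x) Bxx addr0.
by rewrite XV mulNmx; apply/rowP => p; rewrite !mxE.
Qed.
Lemma thc1 : thc 1%g = 0.
Proof.
rewrite /thc /Y f1 X1 mul0mx /= -row_mx0; congr row_mx.
by apply/rowP => p; rewrite !mxE.
Qed.
Lemma thc_c t : thc (c t) = delta_mx 0 (lshift (n - rr) t).
Proof.
rewrite /thc Yc Xc mul0mx delta_mx_lshift; congr row_mx.
by apply/rowP => p; rewrite !mxE.
Qed.
Lemma thc_Dd s : thc (Dd s) = row_mx (Y (Dd s)) (delta_mx 0 s).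
Proof.
rewrite /thc XrowAL; congr row_mx.
by apply/rowP => p; rewrite !mxE (inj_eq ix_inj).
Qed.

Lemma center_lb r' (g : 'I_r' -> G) : (forall i, center (g i)) ->
  (forall x, center x <-> gen (range g) x) -> (m + (n - rr) <= r')%N.
Proof.
move=> cg hg; pose Gm := \matrix_(j < r') thc (g j).
have sp0 : forall x, gen (range g) x -> center x /\ (thc x <= Gm)%MS.
  apply: gen_ind.
  - by split; [exact: center1 | rewrite thc1 sub0mx].
  - move=> u v [cu su] [cv sv]; split; first by apply: centerM => //; exact: centerV.
    rewrite thcM; last exact: cu.
    rewrite thcV -scaleN1r; apply: addmx_sub => //; exact: scalemx_sub.
  - move=> y [j ->]; split; first exact: cg.
    by have := row_sub j Gm; rewrite rowK.
have sp : forall x, center x -> (thc x <= Gm)%MS.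
  by move=> x /hg /sp0 [].
have sc : forall t, ((delta_mx 0 (lshift (n - rr) t) : 'rV[rat]_(m + (n - rr))) <= Gm)%MS.
  by move=> t; rewrite -thc_c; apply: sp; exact: c_central.
have srow : forall y : 'rV[rat]_m, (row_mx y (0 : 'rV[rat]_(n - rr)) <= Gm)%MS.
  move=> y; have -> : row_mx y (0 : 'rV[rat]_(n - rr)) = y *m row_mx 1%:M 0.
    by rewrite mul_mx_row mulmx1 mulmx0.
  apply: submx_trans (submxMl _ _) _; apply/row_subP => t.
  by rewrite row_row_mx row1 row0 -delta_mx_lshift.
apply: rank_lb => q; case: (splitP q) => [t ht | s hs].
  have -> : q = lshift _ t by apply: val_inj.
  exact: sc.
have -> : q = rshift _ s by apply: val_inj.
rewrite delta_mx_rshift.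
have -> : row_mx 0 (delta_mx 0 s) = thc (Dd s) + (-1) *: row_mx (Y (Dd s)) 0.
  by rewrite thc_Dd scaleN1r opp_row_mx add_row_mx subrr oppr0 addr0.
apply: addmx_sub; first by apply: sp; exact: Dd_central.
by apply: scalemx_sub; exact: srow.
Qed.

Lemma center_rank : is_rank_sub (@center G) (m + (n - rr)).
Proof.
split; last by move=> r' g cg hg; exact: center_lb cg hg.
by exists cd; split; [exact: cd_central | exact: center_iff_cd].
Qed.
End CenterPart.

Local Open Scope ring_scope.

Lemma YP_K (I : finType) (F : I -> G) (u : I -> int) : (forall i, X (F i) = 0) ->
  Y (\prod_i zexpg (F i) (u i))%g = \sum_i ((u i)%:~R : rat) *: Y (F i).
Proof.
move=> hX; rewrite /Y fP.
have -> : (\prod_i f (zexpg (F i) (u i)))%g =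
    (\prod_i ((0, ((u i)%:~R : rat) *: Y (F i)) : H))%g.
  by apply: eq_bigr => i _; rewrite fZ fXY hX Hzexpg0.
by rewrite Hprod0.
Qed.

Lemma sum_map_row (k : nat) (z : 'rV[int]_k) (M : 'M[int]_(k, m)) :
  \sum_p ((z 0 p)%:~R : rat) *: map_mx intr (row p M) = map_mx intr (z *m M).
Proof.
apply/rowP => s; rewrite summxE !mxE rmorph_sum; apply: eq_bigr => p _.
by rewrite !mxE rmorphM.
Qed.

Definition NN := #|{: 'I_n * 'I_n}|.
Definition Pz : 'M[int]_(NN, m) :=
  \matrix_(p, t) Lz lam (enum_val p).1 (enum_val p).2 t.

Lemma map_row_Pz p : map_mx intr (row p Pz) = LzQ lam (enum_val p).1 (enum_val p).2.
Proof. by apply/rowP => t; rewrite !mxE. Qed.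

Lemma BL_reindex (x y : 'I_n -> int) :
  BL lam (\row_j ((x j)%:~R : rat)) (\row_j ((y j)%:~R : rat)) =
  map_mx intr ((\row_p (x (enum_val p).1 * y (enum_val p).2)) *m Pz).
Proof.
rewrite BL_expand -sum_map_row.
rewrite pair_big (big_enum_val (fun p : 'I_n * 'I_n =>
   ((\row_j ((x j)%:~R : rat)) 0 p.1 * (\row_j ((y j)%:~R : rat)) 0 p.2) *: LzQ lam p.1 p.2)).
by apply: eq_bigr => p _; rewrite map_row_Pz !mxE intrM.
Qed.

Section DerivedPart.
Variables (L2 : 'M[int]_NN) (R2 : 'M[int]_m) (d2 : seq int).
Hypothesis hL2 : L2 \in unitmx.
Hypothesis hPz : Pz = L2 *m (\matrix_(i, j) (d2`_i *+ (i == j :> nat))) *m R2.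

Definition D2 : 'M[int]_(NN, m) := \matrix_(i, j) (d2`_i *+ (i == j :> nat)).
Definition Dt : 'M[int]_m := \matrix_(i, j) (if (i < NN)%N then d2`_i *+ (i == j :> nat) else 0).
Definition Pi : 'M[int]_(m, NN) := \matrix_(i, p) ((i == p :> nat)%:R).
Definition PiT : 'M[int]_(NN, m) := \matrix_(p, i) ((p == i :> nat)%:R).

Lemma Pi_D2 : Pi *m D2 = Dt.
Proof.
apply/matrixP => i j; rewrite !mxE.
case: (ltnP i NN) => hi.
  rewrite (bigD1 (Ordinal hi)) //= big1 => [|p pi]; last first.
    rewrite !mxE; have -> : (i == p :> nat) = false.
      by apply/negbTE; apply: contra pi => /eqP e; apply/eqP/val_inj.
    by rewrite mul0r.
  by rewrite !mxE eqxx mul1r addr0.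
apply: big1 => p _; rewrite !mxE.
have -> : (i == p :> nat) = false by apply/negbTE; have := ltn_ord p; lia.
by rewrite mul0r.
Qed.

Lemma PiT_Dt : PiT *m Dt = D2.
Proof.
apply/matrixP => p j; rewrite !mxE.
case: (ltnP p m) => hp.
  rewrite (bigD1 (Ordinal hp)) //= big1 => [|i ip]; last first.
    rewrite !mxE; have -> : (p == i :> nat) = false.
      by apply/negbTE; apply: contra ip => /eqP e; apply/eqP/val_inj.
    by rewrite mul0r.
  by rewrite !mxE eqxx mul1r addr0 /= (ltn_ord p).
rewrite big1 => [|i _]; last first.
  rewrite !mxE; have -> : (p == i :> nat) = false by apply/negbTE; have := ltn_ord i; lia.
  by rewrite mul0r.
have -> : (p == j :> nat) = false by apply/negbTE; have := ltn_ord j; lia.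
by rewrite mulr0n.
Qed.

Definition W : 'M[int]_m := Dt *m R2.
Definition gD (t : 'I_m) : G := C (fun s => W t s).

Lemma YgD t : Y (gD t) = map_mx intr (row t W).
Proof. by rewrite YC; apply/rowP => s; rewrite !mxE. Qed.

Lemma gD_derived t : derived (gD t).
Proof.
pose v := row t (Pi *m invmx L2).
have hv : row t W = v *m Pz.
  rewrite hPz -/D2 /v -row_mul !mulmxA mulmxKV //.
  by rewrite Pi_D2.
pose Q := (\prod_(p < NN) zexpg [~ a (enum_val p).1, a (enum_val p).2] (v 0 p))%g.
have -> : gD t = Q.
  apply: K_eq; first exact: KC.
    by apply: KP => p; apply: KZ; exact: comm_K.
  rewrite YgD YP_K => [|p]; last exact: XR.
  rewrite hv -sum_map_row; apply: eq_bigr => p _.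
  by rewrite YR !Xa BL_dd map_row_Pz.
apply: gen_prod => p; apply: gen_zexpg; apply: gen_sub.
by do 2 eexists.
Qed.

Lemma comm_gen u v : gen (range gD) [~ u, v]%g.
Proof.
have [yu [ku [kku ->]]] := NF_all u; have [yv [kv [kkv ->]]] := NF_all v.
set U := (A yu * ku)%g; set V := (A yv * kv)%g.
have XU : X U = \row_j ((yu j)%:~R : rat) by rewrite /U XM (XK kku) addr0 XA.
have XV' : X V = \row_j ((yv j)%:~R : rat) by rewrite /V XM (XK kkv) addr0 XA.
pose zv : 'rV[int]_NN := \row_(p < NN) (yu (enum_val p).1 * yv (enum_val p).2).
pose y' := zv *m L2 *m PiT.
have hy : zv *m Pz = y' *m W.
  by rewrite hPz -/D2 -PiT_Dt /y' /W !mulmxA.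
pose Q := (\prod_(t < m) zexpg (gD t) (y' 0 t))%g.
have -> : [~ U, V]%g = Q.
  apply: K_eq; first exact: comm_K.
    by apply: KP => t; apply: KZ; exact: KC.
  rewrite YR XU XV' BL_reindex YP_K => [|t]; last exact: XC.
  rewrite hy -sum_map_row; apply: eq_bigr => t _.
  by rewrite YgD.
apply: gen_prod => t; apply: gen_zexpg; apply: gen_sub; by exists t.
Qed.

Lemma derived_iff x : derived x <-> gen (range gD) x.
Proof.
split.
  by apply: gen_gen => y [u [v ->]]; exact: comm_gen.
apply: gen_gen => y [t ->]; exact: gD_derived.
Qed.

End DerivedPart.
End Main.

Lemma ex_min_nat (P : nat -> Prop) k : P k -> exists r, P r /\ forall r', P r' -> (r <= r')%N.
Proof.
elim: k {-2}k (leqnn k) => [|k IH] j hj Pj.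
  exists j; split => // r' _; by move: hj; rewrite leqn0 => /eqP ->.
case: (classic (exists r', P r' /\ (r' < j)%N)) => [[r' [Pr' hr']]|hno].
  by apply: (IH r') => //; lia.
exists j; split => // r' Pr'; rewrite leqNgt; apply/negP => h; apply: hno.
by exists r'; split.
Qed.

Unset Implicit Arguments.
Theorem corollary4p4 (n m : nat) (hn : (2 <= n)%N) (hm : (1 <= m)%N)
    (lam : 'I_n -> 'I_n -> 'I_m -> int)
    (G : groupType) (a : 'I_n -> G) (c : 'I_m -> G)
    (hG : presented_by lam a c) :
  (fin_gen G /\ torsion_free G /\ two_step_nilpotent G /\ malcev_basis a c) /\
  (exists (k : nat) (d : 'I_k -> G),
      center_basis c d /\ is_rank_quot_center G (n - k)) /\
  (exists r1 r2 : nat, is_rank_quot_center G r1 /\ is_rank_sub (@center G) r2 /\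
      (r1 + r2 = n + m)%N) /\
  (exists r3 r2 : nat, is_rank_sub (@derived G) r3 /\ is_rank_sub (@center G) r2 /\
      (r3 <= m <= r2)%N).
Proof.
have [hrel [hgen huniv]] := hG.
pose a' : 'I_n -> @Hty n m (LamQ lam) := fun i => (delta_mx 0%R i, 0%R).
pose c' : 'I_m -> @Hty n m (LamQ lam) := fun t => (0%R, delta_mx 0%R t).
have hrel' : pres_rels lam a' c'.
  split.
    move=> i j hij; rewrite HcommE /= -/(BL lam _ _) BL_dd.
    have -> : (\prod_(t < m) zexpg (c' t) (lam i j t))%g =
        (\prod_(t < m) ((0%R, ((lam i j t)%:~R : rat) *: delta_mx 0%R t)%R : @Hty n m (LamQ lam)))%g.
      by apply: eq_bigr => t _; rewrite /c' Hzexpg0.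
    rewrite Hprod0; congr pair.
    rewrite [LHS]row_sum_delta; apply: eq_bigr => t _; rewrite mxE /Lz hij.
    by rewrite ltnNge (ltnW hij) /= subr0.
  split.
    by move=> i j; rewrite HcommE /= B0l B0r subrr.
  by move=> k r; rewrite HcommE /= B0l subrr.
have [f [fM [fa fc]]] := huniv _ a' c' hrel'.
have hm0 : (0 < m)%N by [].
have [L hL [R hR [d hd hMz]]] := int_Smith_normal_form (Mz lam).
have [L2 hL2 [R2 hR2 [d2 hd2 hPz]]] := int_Smith_normal_form (Pz lam).
have rle := rr_le n d.
split.
  split; first exact: (part_fin_gen hgen).
  split; first exact: (part_torsion hrel hgen fM fa fc).
  split; first exact: (two_step hrel hgen).
  exact: (part_malcev hrel hgen fM fa fc).
split.
  exists (n - rr n d)%N, (Dd a hm0 hL hR hd).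
  split; first exact: (cb hrel hgen fM fa fc hm0 hL hR hd hMz).
  rewrite subKn //; exact: (quot_rank hrel hgen fM fa fc hm0 hL hR hd hMz).
split.
  exists (rr n d), (m + (n - rr n d))%N; split.
    exact: (quot_rank hrel hgen fM fa fc hm0 hL hR hd hMz).
  split; first exact: (center_rank hrel hgen fM fa fc hm0 hL hR hd hMz).
  lia.
pose Pd r := exists g : 'I_r -> G, (forall i, derived (g i)) /\
   (forall x, derived x <-> gen (range g) x).
have Pm : Pd m.
  exists (gD n c R2 d2); split.
    move=> t; exact: (gD_derived hrel hgen fM fa fc hL2 hPz).
  move=> x; exact: (derived_iff hrel hgen fM fa fc hL2 hPz).
have [r3 [Pr3 hmin]] := ex_min_nat Pm.
exists r3, (m + (n - rr n d))%N; split.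
  split; first exact: Pr3.
  by move=> r' g hg1 hg2; apply: hmin; exists g.
split; first exact: (center_rank hrel hgen fM fa fc hm0 hL hR hd hMz).
by rewrite hmin // leq_addr.
Qed.
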